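(* Let $b, r \in \mathbb{N}$ with $4 \leq b < r < b + 2\left\lfloor\frac{b+2}{6}\right\rfloor^2$. Then $$h(b,r) \leq 8\lambda_{b,r}\left(2 + \left\lfloor\frac{r}{2}\right\rfloor + \left\lfloor\frac{b+2}{2}\right\rfloor - 2\left\lfloor\frac{b+2}{6}\right\rfloor\right),$$ where $\lambda_{b,r} = \max\{1, (b \bmod 2) + (r \bmod 2)\}$.
   Context: For a graph $G$ with an edge-colouring $f\colon E(G)\to\{1,\dots,k\}$ and $1\le j\le k$: for $S\subseteq V(G)$, $e_j(S)$ is the number of edges coloured $j$ in the subgraph of $G$ induced by $S$; for a vertex $v$, $e_j[v]=e_j(N[v])$ where $N[v]$ is the closed neighbourhood of $v$; $\deg_j(v)$ is the number of edges coloured $j$ incident to $v$. Given $k\ge 2$ and a strictly increasing sequence of positive integers $(a_1,\dots,a_k)$, a $d$-regular graph $G$ with $d=\sum_j a_j$ is an $(a_1,\dots,a_k)$-flip graph if there is an edge-colouring with colours $\{1,\dots,k\}$ such that $\deg_j(v)=a_j$ for every vertex $v$ and every $j$, and $e_k[v]<e_{k-1}[v]<\dots<e_1[v]$ for every vertex $v$. Such a sequence is then called a $k$-flip sequence. For a $2$-flip sequence $(b,r)$ (so $b<r$), $h(b,r)$ denotes the smallest number of vertices of a $(b,r)$-flip graph. *)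

(* Defs.v *)
From mathcomp Require Import all_boot.
Set Implicit Arguments. Unset Strict Implicit. Unset Printing Implicit Defensive.

Section FlipGraphs.
Variable n : nat.
Implicit Types (e : rel 'I_n) (c : 'I_n -> 'I_n -> nat).

Definition simple_graph e : Prop :=
  (forall u v, e u v = e v u) /\ (forall v, ~~ e v v).

Definition nbhd e (v : 'I_n) : {set 'I_n} := [set u | e v u].

Definition cnbhd e (v : 'I_n) : {set 'I_n} := [set u | (u == v) || e v u].

Definition deg_col e c (j : nat) (v : 'I_n) : nat :=
  #|[set u | e v u && (c v u == j)]|.

(* e_j(S): number of edges coloured j in the subgraph induced by S
   (each unordered edge {u,w} counted once, via u < w) *)
Definition ecol e c (j : nat) (S : {set 'I_n}) : nat :=
  #|[set p : 'I_n * 'I_n |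
      [&& p.1 < p.2, p.1 \in S, p.2 \in S, e p.1 p.2 & c p.1 p.2 == j]]|.

Definition ecol_v e c (j : nat) (v : 'I_n) : nat := ecol e c j (cnbhd e v).

Definition flip_colouring e (k : nat) (a : nat -> nat) c : Prop :=
  [/\ forall u v, e u v -> c u v = c v u,
      forall u v, e u v -> 1 <= c u v <= k,
      forall v j, 1 <= j <= k -> deg_col e c j v = a j
    & forall v j, 1 <= j < k -> ecol_v e c j.+1 v < ecol_v e c j v].

Definition flip_graph e (k : nat) (a : nat -> nat) : Prop :=
  [/\ simple_graph e,
      forall v : 'I_n, #|nbhd e v| = \sum_(1 <= j < k.+1) a j
    & exists c, flip_colouring e k a c].

End FlipGraphs.

Definition flip_seq_ok (k : nat) (a : nat -> nat) : Prop :=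
  2 <= k /\ 0 < a 1 /\ forall j, 1 <= j < k -> a j < a j.+1.

Definition seq2 (b r : nat) : nat -> nat := fun j => if j == 1 then b else r.

(* h(b,r) <= N : some (b,r)-flip graph (with at least one vertex) has at most
   N vertices; equivalent to "the minimum order h(b,r) exists and is <= N". *)
Definition h_le (b r N : nat) : Prop :=
  exists (n : nat) (e : rel 'I_n), 0 < n /\ n <= N /\ flip_graph e 2 (seq2 b r).

Definition lambda_br (b r : nat) : nat := maxn 1 (b %% 2 + r %% 2).

(* Main.v *)
Require Import Defs.
From mathcomp Require Import all_boot zify.
Set Implicit Arguments. Unset Strict Implicit. Unset Printing Implicit Defensive.

Lemma card_sumb (T : finType) (P : pred T) : #|[set x | P x]| = \sum_(x : T) (P x : nat).
Proof.
rewrite -sum1_card big_mkcond /=; apply: eq_bigr => x _; rewrite inE; by case: (P x).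
Qed.

Lemma sum_nat_range m lo hi :
  \sum_(0 <= i < m) ((lo <= i) && (i < hi) : nat) = minn m hi - lo.
Proof.
elim: m => [|m IH]; first by rewrite big_geq // min0n.
rewrite big_nat_recr //= IH.
case: (leqP lo m) => h1; case: (ltnP m hi) => h2 /=; lia.
Qed.

Lemma sum_ord_range r lo hi :
  hi <= r -> \sum_(w < r) ((lo <= w) && (w < hi) : nat) = hi - lo.
Proof.
move=> h; rewrite -(big_mkord xpredT (fun i => ((lo <= i) && (i < hi) : nat))).
by rewrite sum_nat_range; congr (_ - _); apply/minn_idPr.
Qed.

Lemma sum_shift r (z0 : 'I_r) lo hi :
  hi <= r -> \sum_(z < r) ((lo <= (z0 + z) %% r) && ((z0 + z) %% r < hi) : nat) = hi - lo.
Proof.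
move=> hr.
have rpos : 0 < r by case: z0 => m hm; lia.
pose h (z : 'I_r) : 'I_r := Ordinal (ltn_pmod (z0 + z) rpos).
have hinj : injective h.
  move=> x y /(congr1 val) /= /eqP; rewrite eqn_modDl !modn_small //.
  by move/eqP/val_inj.
rewrite -(sum_ord_range lo hr) [RHS](reindex_inj hinj) /=.
by apply: eq_bigr.
Qed.

Lemma sum_shift_lt r (z0 : 'I_r) hi :
  hi <= r -> \sum_(z < r) ((z0 + z) %% r < hi : nat) = hi.
Proof. by move=> hr; rewrite -[RHS]subn0 -(sum_shift z0 0 hr). Qed.

Lemma sum_true r : \sum_(z < r) (true : nat) = r.
Proof. by rewrite sum1_card card_ord. Qed.

Lemma sum_false r : \sum_(z < r) (false : nat) = 0.
Proof. by rewrite big1. Qed.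

Lemma sum_eq1 r (z0 : 'I_r) : \sum_(z < r) (z == z0 : nat) = 1.
Proof. by rewrite (bigD1 z0) //= eqxx big1 // => i /negbTE ->. Qed.

Lemma sum_andF r (P : 'I_r -> bool) : \sum_(z < r) (P z && false : nat) = 0.
Proof. by rewrite big1 // => z _; rewrite andbF. Qed.
Lemma sum_andT r (P : 'I_r -> bool) : \sum_(z < r) (P z && true : nat) = \sum_(z < r) (P z : nat).
Proof. by apply: eq_bigr => z _; rewrite andbT. Qed.

Lemma sum_mul0 r (F : 'I_r -> nat) : \sum_(z < r) 0 * F z = 0.
Proof. by rewrite big1. Qed.

Lemma eqNb (x : bool) : (x == ~~ x) = false. Proof. by case: x. Qed.
Lemma eqbN' (x : bool) : (~~ x == x) = false. Proof. by case: x. Qed.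

Section Constr.
Variables (b r : nat).
Definition T := (bool * bool * 'I_r)%type%type.
Definition al := b %/ 2.
Definition kk (x y : T) : nat := (x.2 + y.2) %% r.
Definition red (x y : T) : bool := (x.1.2 == y.1.2) && (x.1.1 != y.1.1).
Definition blue (x y : T) : bool :=
  (x.1.2 != y.1.2) &&
  (if x.1.1 == y.1.1 then kk x y < al else (al <= kk x y) && (kk x y < b)).

Lemma sumT (F : T -> nat) i0 j0 :
  \sum_(x : T) F x = \sum_z F (i0, j0, z) + \sum_z F (~~ i0, j0, z)
     + \sum_z F (i0, ~~ j0, z) + \sum_z F (~~ i0, ~~ j0, z).
Proof.
have -> : \sum_(x : T) F x = \sum_(p : (bool * bool) * 'I_r) F (p.1, p.2)
  by apply: eq_bigr => [[]].
rewrite -(pair_bigA _ (fun ij z => F (ij, z))) /=.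
have -> : \sum_(ij : bool * bool) \sum_z F (ij, z) =
          \sum_(ij : bool * bool) \sum_z F (ij.1, ij.2, z)
  by apply: eq_bigr => [[]].
rewrite -(pair_bigA _ (fun i j => \sum_z F (i, j, z))) /=.
rewrite !big_bool /=.
case: i0; case: j0 => /=; lia.
Qed.

Lemma sum_eq1P (z0 : 'I_r) (P : 'I_r -> bool) :
  \sum_(z < r) ((z == z0) && P z : nat) = P z0.
Proof.
rewrite (bigD1 z0) //= eqxx big1 ?addn0 // => i /negbTE ->; by [].
Qed.

Lemma red_sym x y : red x y = red y x.
Proof. by rewrite /red eq_sym [_.1.1 == _]eq_sym. Qed.
Lemma blue_sym x y : blue x y = blue y x.
Proof. by rewrite /blue /kk eq_sym [_.1.1 == _]eq_sym addnC. Qed.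
Lemma red_irr x : red x x = false.
Proof. by rewrite /red !eqxx. Qed.
Lemma blue_irr x : blue x x = false.
Proof. by rewrite /blue eqxx. Qed.
Lemma red_blue x y : red x y -> blue x y = false.
Proof. by rewrite /red /blue => /andP[/eqP -> _]; rewrite eqxx. Qed.

Hypothesis hbr : b < r.
Variables (iv jv : bool) (zv : 'I_r).
Definition v : T := (iv, jv, zv).
Definition inN (x : T) := (x == v) || red v x || blue v x.

Ltac simp := rewrite /inN /v /red /blue /kk /= ?xpair_eqE ?eqxx ?negbK ?eqNb ?eqbN' /=
   ?andbT ?andbF ?orbT ?orbF ?andTb ?andFb ?orTb ?orFb ?sum_andF ?sum_andT ?sum_true ?sum_false ?sum_eq1.

Lemma inN1 z : inN (iv, jv, z) = (z == zv).
Proof. by simp. Qed.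
Lemma inN2 z : inN (~~ iv, jv, z) = true.
Proof. by simp. Qed.
Lemma inN3 z : inN (iv, ~~ jv, z) = ((zv + z) %% r < al).
Proof. by simp. Qed.
Lemma inN4 z : inN (~~ iv, ~~ jv, z) = (al <= (zv + z) %% r) && ((zv + z) %% r < b).
Proof. by simp. Qed.

Lemma sumN (F : bool -> T -> nat) :
  \sum_(y : T) F (inN y) y =
    \sum_(z < r) F (z == zv) (iv, jv, z) + \sum_(z < r) F true (~~ iv, jv, z)
  + \sum_(z < r) F ((zv + z) %% r < al) (iv, ~~ jv, z)
  + \sum_(z < r) F ((al <= (zv + z) %% r) && ((zv + z) %% r < b)) (~~ iv, ~~ jv, z).
Proof.
rewrite (sumT _ iv jv); congr (_ + _ + _ + _); apply: eq_bigr => z _;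
  by rewrite ?inN1 ?inN2 ?inN3 ?inN4.
Qed.

Definition Gred x := \sum_(y : T) (inN y && red x y : nat).
Definition Gblue x := \sum_(y : T) (inN y && blue x y : nat).

Lemma hal : al <= b. Proof. rewrite /al; lia. Qed.
Lemma hbr' : b <= r. Proof. by apply: ltnW. Qed.

Lemma Gr1 z : Gred (iv, jv, z) = r.
Proof. rewrite /Gred (sumN (fun c y => (c && red (iv, jv, z) y : nat))); simp; lia. Qed.
Lemma Gr2 z : Gred (~~ iv, jv, z) = 1.
Proof. rewrite /Gred (sumN (fun c y => (c && red (~~ iv, jv, z) y : nat))); simp; lia. Qed.
Lemma Gr3 z : Gred (iv, ~~ jv, z) = b - al.
Proof. rewrite /Gred (sumN (fun c y => (c && red (iv, ~~ jv, z) y : nat))); simp.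
rewrite (sum_shift zv al hbr'); lia. Qed.
Lemma Gr4 z : Gred (~~ iv, ~~ jv, z) = al.
Proof. rewrite /Gred (sumN (fun c y => (c && red (~~ iv, ~~ jv, z) y : nat))); simp.
rewrite (sum_shift_lt zv (leq_trans hal hbr')); lia. Qed.
Lemma Gb3 z : Gblue (iv, ~~ jv, z) = ((z + zv) %% r < al) + (b - al).
Proof. rewrite /Gblue (sumN (fun c y => (c && blue (iv, ~~ jv, z) y : nat))); simp.
rewrite (sum_eq1P zv (fun y => (z + y) %% r < al)) (sum_shift z al hbr'); lia. Qed.
Lemma Gb4 z : Gblue (~~ iv, ~~ jv, z) = ((al <= (z + zv) %% r) && ((z + zv) %% r < b)) + al.
Proof. rewrite /Gblue (sumN (fun c y => (c && blue (~~ iv, ~~ jv, z) y : nat))); simp.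
rewrite (sum_eq1P zv (fun y => (al <= (z + y) %% r) && ((z + y) %% r < b))).
rewrite (sum_shift_lt z (leq_trans hal hbr')); lia. Qed.

Lemma Tred : \sum_(x : T) \sum_(y : T) (inN x && inN y && red x y : nat)
   = 2 * r + 2 * (al * (b - al)).
Proof.
have -> : \sum_(x : T) \sum_(y : T) (inN x && inN y && red x y : nat)
        = \sum_(x : T) inN x * Gred x.
  apply: eq_bigr => x _; rewrite /Gred big_distrr /=; apply: eq_bigr => y _.
  by case: (inN x); rewrite ?mul1n ?mul0n.
rewrite (sumN (fun c x => c * Gred x)) /=.
have e1 : \sum_(z < r) (z == zv) * Gred (iv, jv, z) = r.
  rewrite (eq_bigr (fun z : 'I_r => (z == zv) * r)) => [|z _]; last by rewrite Gr1.
  by rewrite -big_distrl /= sum_eq1 mul1n.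
have e2 : \sum_(z < r) true * Gred (~~ iv, jv, z) = r.
  rewrite (eq_bigr (fun z : 'I_r => 1)) => [|z _]; last by rewrite Gr2.
  by rewrite sum1_card card_ord.
have e3 : \sum_(z < r) ((zv + z) %% r < al) * Gred (iv, ~~ jv, z) = al * (b - al).
  rewrite (eq_bigr (fun z : 'I_r => ((zv + z) %% r < al) * (b - al))) => [|z _]; last by rewrite Gr3.
  by rewrite -big_distrl /= (sum_shift_lt zv (leq_trans hal hbr')).
have e4 : \sum_(z < r) ((al <= (zv + z) %% r) && ((zv + z) %% r < b)) * Gred (~~ iv, ~~ jv, z) = (b - al) * al.
  rewrite (eq_bigr (fun z : 'I_r => ((al <= (zv + z) %% r) && ((zv + z) %% r < b)) * al)) => [|z _]; last by rewrite Gr4.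
  by rewrite -big_distrl /= (sum_shift zv al hbr').
rewrite e1 e2 e3 e4; lia.
Qed.

Lemma Tblue : \sum_(x : T) \sum_(y : T) (inN x && inN y && blue x y : nat)
   = 2 * (b + 2 * (al * (b - al))).
Proof.
set Q := fun x y => inN x && inN y && blue x y.
have -> : \sum_(x : T) \sum_(y : T) (Q x y : nat) =
   \sum_(x : T) \sum_(y : T) (Q x y && (x.1.2 == jv) : nat)
   + \sum_(x : T) \sum_(y : T) (Q x y && (x.1.2 != jv) : nat).
  rewrite -big_split /=; apply: eq_bigr => x _; rewrite -big_split /=.
  by apply: eq_bigr => y _; case: (x.1.2 == jv); case: (Q x y).
have -> : \sum_(x : T) \sum_(y : T) (Q x y && (x.1.2 == jv) : nat) =
   \sum_(x : T) \sum_(y : T) (Q x y && (x.1.2 != jv) : nat).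
  rewrite exchange_big /=; apply: eq_bigr => y _; apply: eq_bigr => x _.
  rewrite /Q blue_sym; case hb: (blue y x); rewrite ?andbF //=.
  move: hb; rewrite /blue => /andP[hne _].
  rewrite [inN y && _]andbC; case: (inN x && inN y) => //=.
  by move: hne; case: (x.1.2); case: (y.1.2); case: jv.
have -> : \sum_(x : T) \sum_(y : T) (Q x y && (x.1.2 != jv) : nat) =
   \sum_(x : T) (x.1.2 != jv) * (inN x * Gblue x).
  apply: eq_bigr => x _; rewrite /Gblue !big_distrr /=; apply: eq_bigr => y _.
  by rewrite /Q; case: (x.1.2 != jv); case: (inN x); rewrite ?mul1n ?mul0n ?andbF ?andbT.
rewrite (sumT _ iv jv) /= eqxx eqbN' /= !sum_mul0 !add0n.
have e3 : \sum_(z < r) 1 * (inN (iv, ~~ jv, z) * Gblue (iv, ~~ jv, z)) = al * (1 + (b - al)).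
  rewrite (eq_bigr (fun z : 'I_r => ((zv + z) %% r < al) * (1 + (b - al)))) => [|z _]; last first.
    by rewrite inN3 Gb3 mul1n addnC; case: (_ < al).
  by rewrite -big_distrl /= (sum_shift_lt zv (leq_trans hal hbr')).
have e4 : \sum_(z < r) 1 * (inN (~~ iv, ~~ jv, z) * Gblue (~~ iv, ~~ jv, z)) = (b - al) * (1 + al).
  rewrite (eq_bigr (fun z : 'I_r => ((al <= (zv + z) %% r) && ((zv + z) %% r < b)) * (1 + al))) => [|z _]; last first.
    by rewrite inN4 Gb4 mul1n addnC; case: (_ && _).
  by rewrite -big_distrl /= (sum_shift zv al hbr').
rewrite e3 e4; have := hal; lia.
Qed.

Lemma Dred : \sum_(x : T) (red v x : nat) = r.
Proof. rewrite (sumT _ iv jv); simp; lia. Qed.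
Lemma Dblue : \sum_(x : T) (blue v x : nat) = b.
Proof. rewrite (sumT _ iv jv); simp.
rewrite (sum_shift_lt zv (leq_trans hal hbr')) (sum_shift zv al hbr'); have := hal; lia. Qed.
End Constr.

Lemma ecol_ord n (e : rel 'I_n) c j S :
  (forall u w, e u w = e w u) -> (forall u, ~~ e u u) ->
  (forall u w, e u w -> c u w = c w u) ->
  (ecol e c j S).*2 =
  \sum_(u : 'I_n) \sum_(w : 'I_n) ([&& u \in S, w \in S, e u w & c u w == j] : nat).
Proof.
move=> esym eirr csym.
rewrite pair_big /= /ecol card_sumb -addnn.
set P := fun p : 'I_n * 'I_n => [&& p.1 \in S, p.2 \in S, e p.1 p.2 & c p.1 p.2 == j].
have -> : \sum_p (P p : nat) = \sum_p ((P p && (p.1 < p.2)) : nat) + \sum_p ((P p && (p.2 < p.1)) : nat).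
  rewrite -big_split /=; apply: eq_bigr => [[u w]] _ /=.
  rewrite /P /=; case: (ltngtP u w) => h; rewrite ?andbT ?andbF ?addn0 ?add0n //.
  have huw : u = w by [apply: val_inj | ].
  by rewrite huw (negbTE (eirr w)) !andbF.
congr (_ + _).
  by apply: eq_bigr => p _; rewrite /P; case: (p.1 < p.2); rewrite ?andbT ?andbF.
rewrite (reindex (fun p : 'I_n * 'I_n => (p.2, p.1))) /=; last first.
  by exists (fun p : 'I_n * 'I_n => (p.2, p.1)) => [[]|[]].
apply: eq_bigr => [[u w]] _ /=; rewrite /P /=.
case: (w < u); rewrite ?andbT ?andbF //=.
case euw: (e u w); rewrite esym euw ?andbF //=.
by rewrite (csym _ _ euw); case: (u \in S); case: (w \in S).
Qed.

Lemma col1 b r (x y : T r) :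
  ((red x y || blue b x y) && ((if red x y then 2 else 1) == 1)) = blue b x y.
Proof. case h: (red x y); first by rewrite (red_blue b h). by rewrite orFb andbT. Qed.
Lemma col2 b r (x y : T r) :
  ((red x y || blue b x y) && ((if red x y then 2 else 1) == 2)) = red x y.
Proof. case h: (red x y) => //=; by rewrite andbF. Qed.

Lemma arith b r : 4 <= b -> b < r -> r < b + 2 * ((b + 2) %/ 6) ^ 2 ->
  r + al b * (b - al b) < b + 2 * (al b * (b - al b)).
Proof.
move=> h4 h1 h2; rewrite /al.
set t := (b + 2) %/ 6 in h2 *; set a := b %/ 2.
have ht : 2 * t <= a by rewrite /t /a; lia.
have ha : a <= b - a by rewrite /a; lia.
have : 2 * t ^ 2 <= a * (b - a).
  apply: leq_trans (_ : (2 * t) * (2 * t) <= _); first by rewrite expnS expn1; lia.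
  by apply: leq_mul => //; apply: leq_trans ha.
lia.
Qed.

Definition TF (r : nat) : finType := (bool * bool * 'I_r)%type.

Theorem theorem3p1 (b r : nat) :
  4 <= b -> b < r -> r < b + 2 * ((b + 2) %/ 6) ^ 2 ->
  h_le b r (8 * lambda_br b r *
            (2 + r %/ 2 + (b + 2) %/ 2 - 2 * ((b + 2) %/ 6))).
Proof.
move=> hb4 hbr hrt.
have cardT : #|TF r| = 4 * r by rewrite /T !card_prod !card_bool card_ord.
pose f : 'I_#|TF r| -> T r := enum_val.
have fbij : bijective f by exact: enum_val_bij.
have finj : injective f by exact: bij_inj.
have tr : forall G : T r -> nat, \sum_(u : 'I_#|TF r|) G (f u) = \sum_(x : T r) G x.
  by move=> G; rewrite [RHS](reindex f) //; exact: onW_bij.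
pose E := fun x y : T r => red x y || blue b x y.
pose e := fun u w : 'I_#|TF r| => E (f u) (f w).
pose c := fun u w : 'I_#|TF r| => if red (f u) (f w) then 2 else 1.
have esym : forall u w, e u w = e w u by move=> u w; rewrite /e /E red_sym blue_sym.
have eirr : forall u, ~~ e u u by move=> u; rewrite /e /E red_irr blue_irr.
have csym : forall u w, e u w -> c u w = c w u by move=> u w _; rewrite /c red_sym.
exists #|TF r|, e; split; first by rewrite cardT; lia.
split.
  rewrite cardT; have hl : 1 <= lambda_br b r by rewrite /lambda_br leq_maxl.
  apply: leq_trans (_ : 8 * 1 * (2 + r %/ 2 + (b + 2) %/ 2 - 2 * ((b + 2) %/ 6)) <= _).
    lia.
  by apply: leq_mul => //; apply: leq_mul.
split.
- by split.
- move=> u0; rewrite /nbhd (card_sumb (fun u => e u0 u)).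
  have -> : \sum_(1 <= j < 3) seq2 b r j = b + r.
    by rewrite big_ltn // big_ltn // big_geq // /seq2 /= addn0.
  case hx: (f u0) => [[iv jv] zv].
  rewrite (tr (fun x => E (f u0) x)) hx.
  have -> : \sum_(x : T r) (E (iv, jv, zv) x : nat) =
            \sum_(x : T r) ((blue b (v iv jv zv) x : nat) + (red (v iv jv zv) x : nat)).
    apply: eq_bigr => x _; rewrite /E /v; case h: (red _ x).
      by rewrite (red_blue b h).
    by rewrite orFb addn0.
  by rewrite big_split /= (Dblue hbr) (Dred hbr iv jv zv).
exists c; split.
- by [].
- by move=> u w _; rewrite /c; case: (red _ _).
- move=> u0 j /andP[hj1 hj2]; rewrite /deg_col (card_sumb (fun u => e u0 u && (c u0 u == j))).
  case hx: (f u0) => [[iv jv] zv].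
  have [->|->] : j = 1 \/ j = 2 by lia.
    rewrite (tr (fun x => E (f u0) x && ((if red (f u0) x then 2 else 1) == 1))).
    under eq_bigr => x _ do rewrite col1.
    by rewrite hx (Dblue hbr iv jv zv).
  rewrite (tr (fun x => E (f u0) x && ((if red (f u0) x then 2 else 1) == 2))).
  under eq_bigr => x _ do rewrite col2.
  by rewrite hx (Dred hbr iv jv zv).
- move=> u0 j /andP[hj1 hj2]; have -> : j = 1 by lia.
  rewrite -ltn_double /ecol_v !ecol_ord //.
  case hx: (f u0) => [[iv jv] zv].
  have hN : forall u, (u \in cnbhd e u0) = inN b iv jv zv (f u).
    by move=> u; rewrite /cnbhd inE /inN /v -hx (inj_eq finj) /e /E orbA.
  have HH : forall j, \sum_u \sum_w ([&& u \in cnbhd e u0, w \in cnbhd e u0, e u w & c u w == j] : nat)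
      = \sum_u \sum_w (inN b iv jv zv (f u) && inN b iv jv zv (f w) && (E (f u) (f w) && ((if red (f u) (f w) then 2 else 1) == j)) : nat).
    move=> j'; apply: eq_bigr => u _; apply: eq_bigr => w _.
    by rewrite !hN /e /c andbA andbA.
  rewrite !HH.
  under eq_bigr => u _ do under eq_bigr => w _ do rewrite col2.
  under [X in _ < X]eq_bigr => u _ do under eq_bigr => w _ do rewrite col1.
  rewrite (tr (fun x => \sum_w (inN b iv jv zv x && inN b iv jv zv (f w) && red x (f w) : nat))).
  rewrite (tr (fun x => \sum_w (inN b iv jv zv x && inN b iv jv zv (f w) && blue b x (f w) : nat))).
  under eq_bigr => x _ do rewrite (tr (fun y => (inN b iv jv zv x && inN b iv jv zv y && red x y : nat))).
  under [X in _ < X]eq_bigr => x _ do rewrite (tr (fun y => (inN b iv jv zv x && inN b iv jv zv y && blue b x y : nat))).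
  rewrite (Tred hbr) (Tblue hbr).
  have := arith hb4 hbr hrt; lia.
Qed.
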